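(* Let $\Bbbk$ be a field. A quantum graded algebra with a straightening law $A$ on a finite poset $(\Pi,<_{\rm st})$ is noetherian and satisfies polynomial growth (PG).
   Context: Quantum graded A.S.L.: an $\mathbb N$-graded $\Bbbk$-algebra $A$ with a finite subset $\Pi$ partially ordered by $<_{\rm st}$ such that (1) elements of $\Pi$ are homogeneous of positive degree; (2) $\Pi$ generates $A$; (3) standard monomials ($1$ and $\alpha_1\cdots\alpha_s$, $\alpha_i\in\Pi$, $\alpha_1\le_{\rm st}\dots\le_{\rm st}\alpha_s$) are linearly independent; (4) for incomparable $\alpha,\beta\in\Pi$, $\alpha\beta$ is a linear combination of terms $\lambda$ or $\lambda\mu$, $\lambda,\mu\in\Pi$, $\lambda\le_{\rm st}\mu$, $\lambda<_{\rm st}\alpha,\beta$; (5) for all $\alpha,\beta\in\Pi$ there is $c\in\Bbbk^\ast$ with $\alpha\beta-c\beta\alpha$ a linear combination of such terms. Polynomial growth (PG), in the sense of Levasseur: there exist $c>0$ and $d\in\mathbb N$ such that $\dim_\Bbbk A_n\le cn^d$ for all $n\ge1$. *)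

(* Defs.v *)
From HB Require Import structures.
From mathcomp Require Import all_boot all_order all_algebra.
Set Implicit Arguments. Unset Strict Implicit. Unset Printing Implicit Defensive.
Import Order.TTheory GRing.Theory Num.Theory.
Local Open Scope ring_scope.

(* [G n] is the degree-n homogeneous component; this says A = (+)_n G n is an
   N-graded k-algebra. *)
Definition nat_graded (k : fieldType) (A : algType k) (G : nat -> A -> Prop) : Prop :=
  (forall n, G n 0) /\
  (forall n x y, G n x -> G n y -> G n (x + y)) /\
  (forall n (a : k) x, G n x -> G n (a *: x)) /\
  G 0%N 1 /\
  (forall m n x y, G m x -> G n y -> G (m + n)%N (x * y)) /\
  (forall x : A, exists (N : nat) (c : nat -> A),
      (forall i, G i (c i)) /\ x = \sum_(i < N) c i) /\
  (forall (N : nat) (c : nat -> A), (forall i, G i (c i)) ->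
          \sum_(i < N) c i = 0 -> forall i, (i < N)%N -> c i = 0).

Definition monom (k : fieldType) (A : algType k) (P : Type) (f : P -> A)
  (w : seq P) : A := \prod_(p <- w) f p.

Definition standard (d : Order.disp_t) (P : finPOrderType d) (w : seq P) : bool :=
  sorted (fun x y => (x <= y)%O) w.

Definition term_val (k : fieldType) (A : algType k) (P : Type) (f : P -> A)
  (t : P * option P) : A :=
  f t.1 * (if t.2 is Some mu then f mu else 1).

Definition lower_comb (k : fieldType) (A : algType k) (d : Order.disp_t)
  (P : finPOrderType d) (f : P -> A) (a b : P) (x : A) : Prop :=
  exists s : seq (k * (P * option P)),
    (forall t, t \in s ->
       [/\ (t.2.1 < a)%O, (t.2.1 < b)%O &
           (if t.2.2 is Some mu then (t.2.1 <= mu)%O else true)]) /\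
    x = \sum_(t <- s) t.1 *: term_val f t.2.

(* Quantum graded algebra with a straightening law on (Pi, <st):
   Pi is given as a finite poset P together with an injective map f : P -> A
   and a degree function deg. *)
Definition quantum_graded_ASL (k : fieldType) (A : algType k)
  (G : nat -> A -> Prop) (d : Order.disp_t) (P : finPOrderType d)
  (f : P -> A) (deg : P -> nat) : Prop :=
  nat_graded G /\
  injective f /\
      (forall p, (0 < deg p)%N /\ G (deg p) (f p)) /\
      (forall x : A, exists s : seq (k * seq P),
          x = \sum_(t <- s) t.1 *: monom f t.2) /\
      (* (3) standard monomials are linearly independent *)
      (forall (ws : seq (seq P)) (c : seq P -> k),
          uniq ws -> all (@standard d P) ws ->
          \sum_(w <- ws) c w *: monom f w = 0 ->
          forall w, w \in ws -> c w = 0) /\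
      (* (4) straightening of incomparable pairs *)
      (forall a b : P, ~~ (a >=< b)%O -> lower_comb f a b (f a * f b)) /\
  (* (5) quantum commutation *)
      (forall a b : P, exists c : k, c != 0 /\
          lower_comb f a b (f a * f b - c *: (f b * f a))).

Definition lin_indep (k : fieldType) (A : algType k) (s : seq A) : Prop :=
  forall c : nat -> k, \sum_(i < size s) c i *: s`_i = 0 ->
    forall i, (i < size s)%N -> c i = 0.

(* Polynomial growth: exists c > 0, d with dim A_n <= c n^d for n >= 1.
   dim A_n <= m is expressed as: every linearly independent finite family in
   A_n has at most m elements. *)
Definition poly_growth (k : fieldType) (A : algType k) (G : nat -> A -> Prop) : Prop :=
  exists (c : rat) (e : nat), 0 < c /\
    forall n : nat, (1 <= n)%N -> forall s : seq A,
      (forall x, x \in s -> G n x) -> lin_indep s ->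
      (size s)%:R <= c * n%:R ^+ e.

Definition left_ideal (R : pzRingType) (I : R -> Prop) : Prop :=
  [/\ I 0, (forall x y, I x -> I y -> I (x + y)) & (forall r x, I x -> I (r * x))].
Definition right_ideal (R : pzRingType) (I : R -> Prop) : Prop :=
  [/\ I 0, (forall x y, I x -> I y -> I (x + y)) & (forall r x, I x -> I (x * r))].

Definition ACC (R : pzRingType) (ideal : (R -> Prop) -> Prop) : Prop :=
  forall I : nat -> R -> Prop, (forall n, ideal (I n)) ->
    (forall n x, I n x -> I n.+1 x) ->
    exists N, forall n, (N <= n)%N -> forall x, I n x -> I N x.

Definition noetherian (R : pzRingType) : Prop :=
  ACC (@left_ideal R) /\ ACC (@right_ideal R).

(* Main.v *)
Require Import Defs.
From mathcomp Require Import all_boot all_order all_algebra zify.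
From Stdlib Require Import Classical ClassicalEpsilon.
Set Implicit Arguments. Unset Strict Implicit. Unset Printing Implicit Defensive.
Import Order.POrderTheory GRing.Theory Num.Theory.

Section Words.
Variables (d : Order.disp_t) (P : finPOrderType d).

Definition ht (p : P) : nat := #|[set q : P | (q < p)%O]|.
Definition rk (p : P) : nat := ht p * #|P| + enum_rank p.
Definition Nr : nat := (#|P|.+1 * #|P|).+1.

Lemma rk_inj : injective rk.
Proof.
move=> p q E.
have: rk p %% #|P| = rk q %% #|P| by rewrite E.
rewrite /rk !modnMDl !modn_small ?(ltn_ord (enum_rank _)) // => /val_inj.
exact: enum_rank_inj.
Qed.

Lemma ht_lt p q : (p < q)%O -> ht p < ht q.
Proof.
move=> pq; apply: proper_card; rewrite properE; apply/andP; split.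
  by apply/subsetP => x; rewrite !inE => xp; exact: lt_trans xp pq.
by apply/subsetPn; exists p; rewrite !inE ?ltxx.
Qed.

Lemma rk_lt p q : (p < q)%O -> rk p < rk q.
Proof.
move=> /ht_lt h; rewrite /rk.
have e : (enum_rank p : nat) < #|P| by exact: ltn_ord.
set a := ht p in h *; set b := ht q in h *; set N := #|P| in e *.
set x := (enum_rank p : nat) in e *; set y := (enum_rank q : nat).
nia.
Qed.

Lemma rk_le p q : (p <= q)%O -> rk p <= rk q.
Proof. by rewrite le_eqVlt => /orP[/eqP->//|/rk_lt/ltnW]. Qed.

Lemma rk_bound p : rk p < Nr.
Proof.
have h : ht p <= #|P| by exact: max_card.
have e : (enum_rank p : nat) < #|P| by exact: ltn_ord.
rewrite /rk /Nr.
set a := ht p in h *; set N := #|P| in e h *.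
set x := (enum_rank p : nat) in e *. nia.
Qed.

Definition leR (p q : P) : bool := rk p <= rk q.
Lemma leR_total : total leR.
Proof. by move=> p q; rewrite /leR leq_total. Qed.
Lemma leR_trans : transitive leR.
Proof. by move=> q p r; rewrite /leR; apply: leq_trans. Qed.
Lemma leR_anti : antisymmetric leR.
Proof. by move=> p q; rewrite /leR -eqn_leq => /eqP/rk_inj. Qed.

Definition sortr (s : seq P) := sort leR s.

Lemma perm_sortr s : perm_eq (sortr s) s.
Proof. by rewrite perm_sort. Qed.

Lemma sortr_sorted s : sorted leR (sortr s).
Proof. exact: (sort_sorted leR_total). Qed.

Lemma std_leR s : standard s -> sorted leR s.
Proof. by apply: sub_sorted => p q /rk_le. Qed.

Lemma sortr_std s : standard s -> sortr s = s.
Proof. by move=> /std_leR; apply: sorted_sort; exact: leR_trans. Qed.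

Lemma sortr_perm s t : perm_eq s t -> sortr s = sortr t.
Proof. by move=> H; apply/(perm_sortP leR_total leR_trans leR_anti). Qed.

Lemma sortr_cons b s : all (leR b) s -> sortr (b :: s) = b :: sortr s.
Proof.
move=> H.
have -> : sortr (b :: s) = sortr (b :: sortr s).
  apply: sortr_perm; by rewrite perm_cons perm_sym perm_sortr.
apply: sorted_sort; first exact: leR_trans.
have Hall : all (leR b) (sortr s).
  by apply/allP => x; rewrite (perm_mem (perm_sortr s)) => /(allP H).
by rewrite /= (path_min_sorted Hall) sortr_sorted.
Qed.

Definition chainb (s : seq P) : bool := all (fun p => all (fun q => (p >=< q)%O) s) s.

Lemma std_chain s : standard (sortr s) = chainb s.
Proof.
apply/idP/idP.
- move=> H; have : pairwise (fun x y => (x <= y)%O) (sortr s).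
    by rewrite -sorted_pairwise //; exact: le_trans.
  move=> pw0.
  apply/allP => p ps; apply/allP => q qs.
  have pw := pairwiseP p pw0.
  have {}ps : p \in sortr s by rewrite (perm_mem (perm_sortr s)).
  have {}qs : q \in sortr s by rewrite (perm_mem (perm_sortr s)).
  have ilt : index p (sortr s) < size (sortr s) by rewrite index_mem.
  have jlt : index q (sortr s) < size (sortr s) by rewrite index_mem.
  rewrite -{1}(nth_index p ps) -{1}(nth_index p qs).
  move: (index p _) (index q _) ilt jlt => i j ilt jlt.
  case: (ltngtP i j) => c.
  + by rewrite /Order.comparable (pw i j) //.
  + by rewrite /Order.comparable (pw j i) ?orbT.
  + by rewrite c comparablexx.
- move=> H.
  have : sorted leR (sortr s) := sortr_sorted s.
  apply: (@sub_in_sorted _ (mem s)); last first.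
    by apply/allP => x; rewrite (perm_mem (perm_sortr s)).
  move=> p q ps qs; rewrite /leR => pq.
  have : (p >=< q)%O by move/allP: H => /(_ p ps)/allP/(_ q qs).
  case/orP => // qp.
  have [->//|ne] := eqVneq q p.
  have : (q < p)%O by rewrite lt_def eq_sym ne qp.
  by move/rk_lt; rewrite ltnNge pq.
Qed.

End Words.

Section Ord.
Variables (d : Order.disp_t) (P : finPOrderType d).

Definition cnt (x : seq P) (i : nat) : nat := count (fun p => rk p == i) x.
Definition lexgt (u v : nat -> nat) : bool :=
  [exists i : 'I_(Nr P), [forall j : 'I_(Nr P), (j < i) ==> (u j == v j)] && (v i < u i)].
Definition gtw (x y : seq P) : bool :=
  (size x < size y) || ((size x == size y) && lexgt (cnt x) (cnt y)).

Lemma lexgtP (u v : nat -> nat) : reflect (exists i : 'I_(Nr P), (forall j : 'I_(Nr P), j < i -> u j = v j) /\ v i < u i)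
  (lexgt u v).
Proof.
apply: (iffP existsP) => [[i /andP[/forallP H lt]] | [i [H lt]]]; exists i.
  by split=> // j ji; move: (H j); rewrite ji => /eqP.
by rewrite lt andbT; apply/forallP => j; apply/implyP => /H ->.
Qed.

Lemma lexgt_eq (u u' v v' : nat -> nat) : (forall i : 'I_(Nr P), u i = u' i) -> (forall i : 'I_(Nr P), v i = v' i) ->
  lexgt u v = lexgt u' v'.
Proof.
move=> Hu Hv; apply/lexgtP/lexgtP => -[i [H lt]]; exists i; split.
- by move=> j ji; rewrite -Hu -Hv H.
- by rewrite -Hu -Hv.
- by move=> j ji; rewrite Hu Hv H.
- by rewrite Hu Hv.
Qed.

Lemma lexgt_irr (u : nat -> nat) : lexgt u u = false.
Proof. by apply/negbTE/negP => /lexgtP[i [_]]; rewrite ltnn. Qed.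

Lemma lexgt_trans (u v w : nat -> nat) : lexgt u v -> lexgt v w -> lexgt u w.
Proof.
move=> /lexgtP[i1 [H1 l1]] /lexgtP[i2 [H2 l2]]; apply/lexgtP.
case: (ltngtP i1 i2) => c.
- exists i1; split; first by move=> j ji; rewrite H1 // H2 // (ltn_trans ji c).
  by rewrite -H2.
- exists i2; split; first by move=> j ji; rewrite H1 ?H2 // (ltn_trans ji c).
  by rewrite H1.
- have e : i1 = i2 by apply: val_inj.
  subst i2; exists i1; split; first by move=> j ji; rewrite H1 ?H2.
  exact: ltn_trans l2 l1.
Qed.

Lemma cnt_cat x y i : cnt (x ++ y) i = cnt x i + cnt y i.
Proof. by rewrite /cnt count_cat. Qed.

Lemma lexgt_catl z x y : lexgt (cnt x) (cnt y) -> lexgt (cnt (z ++ x)) (cnt (z ++ y)).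
Proof.
move=> /lexgtP[i [H l]]; apply/lexgtP; exists i; split.
  by move=> j ji; rewrite !cnt_cat H.
by rewrite !cnt_cat ltn_add2l.
Qed.

Lemma lexgt_catr z x y : lexgt (cnt x) (cnt y) -> lexgt (cnt (x ++ z)) (cnt (y ++ z)).
Proof.
move=> /lexgtP[i [H l]]; apply/lexgtP; exists i; split.
  by move=> j ji; rewrite !cnt_cat H.
by rewrite !cnt_cat ltn_add2r.
Qed.

Lemma cnt_perm x x' : perm_eq x x' -> forall i, cnt x i = cnt x' i.
Proof. by move=> /permP H i; rewrite /cnt H. Qed.

Lemma gtw_perm x x' y y' : perm_eq x x' -> perm_eq y y' -> gtw x y = gtw x' y'.
Proof.
move=> px py; rewrite /gtw (perm_size px) (perm_size py).
by rewrite (@lexgt_eq (cnt x) (cnt x') (cnt y) (cnt y')) // => i; exact: cnt_perm.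
Qed.

Lemma gtw_irr x : gtw x x = false.
Proof. by rewrite /gtw ltnn eqxx lexgt_irr. Qed.

Lemma gtw_size x y : gtw x y -> size x <= size y.
Proof. by case/orP=> [/ltnW//|/andP[/eqP-> _]]. Qed.

Lemma gtw_trans x y z : gtw x y -> gtw y z -> gtw x z.
Proof.
rewrite /gtw => /orP[h1|/andP[/eqP e1 l1]] /orP[h2|/andP[/eqP e2 l2]].
- by rewrite (ltn_trans h1 h2).
- by rewrite -e2 h1.
- by rewrite e1 h2.
- by rewrite e1 e2 eqxx (lexgt_trans l1 l2) orbT.
Qed.

Lemma gtw_catl z x y : gtw x y -> gtw (z ++ x) (z ++ y).
Proof.
rewrite /gtw !size_cat ltn_add2l eqn_add2l => /orP[->//|/andP[-> l]].
by rewrite lexgt_catl ?orbT.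
Qed.

Lemma gtw_catr z x y : gtw x y -> gtw (x ++ z) (y ++ z).
Proof.
rewrite /gtw !size_cat ltn_add2r eqn_add2r => /orP[->//|/andP[-> l]].
by rewrite lexgt_catr ?orbT.
Qed.

Lemma gtw_shorter x y : size x < size y -> gtw x y.
Proof. by rewrite /gtw => ->. Qed.

Lemma cnt_mem x p : cnt x (rk p) = count_mem p x.
Proof. by apply: eq_count => q /=; rewrite (inj_eq (@rk_inj d P)). Qed.

Lemma perm_cnt x y : (forall i, i < Nr P -> cnt x i = cnt y i) -> perm_eq x y.
Proof.
move=> H; rewrite /perm_eq; apply/allP => p _ /=.
by rewrite -!cnt_mem H ?rk_bound.
Qed.

Lemma std_eq (x y : seq P) : standard x -> standard y -> perm_eq x y -> x = y.
Proof.
by move=> sx sy pxy; rewrite -(sortr_std sx) -(sortr_std sy); apply: sortr_perm.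
Qed.

Lemma gtw_tot (x y : seq P) : standard x -> standard y -> x != y -> gtw x y || gtw y x.
Proof.
move=> sx sy nxy; rewrite /gtw.
case: (ltngtP (size x) (size y)) => //= e.
have [H|] := boolP [forall i : 'I_(Nr P), cnt x i == cnt y i].
  case/negP: nxy; apply/eqP/std_eq => //; apply: perm_cnt => i ilt.
  by move/forallP: H => /(_ (Ordinal ilt))/eqP.
move=> /forallPn[i0 ne0].
have exP : exists n, (n < Nr P) && (cnt x n != cnt y n) by exists i0; rewrite ltn_ord.
case: (ex_minnP exP) => m /andP[mlt mne] mmin.
have low : forall j : 'I_(Nr P), j < Ordinal mlt -> cnt x j = cnt y j.
  move=> j /= jm; apply/eqP; apply/negPn/negP => nj.
  by have := mmin j; rewrite ltn_ord nj /= => /(_ isT); rewrite leqNgt jm.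
case: (ltngtP (cnt x m) (cnt y m)) => c.
- apply/orP; right; apply/lexgtP; exists (Ordinal mlt); split => // j jm.
  by rewrite low.
- apply/orP; left; apply/lexgtP; exists (Ordinal mlt); split => // j jm.
- by rewrite c eqxx in mne.
Qed.

Definition gf L (g : {ffun 'I_(Nr P) -> 'I_L.+1}) : nat -> nat :=
  fun i => (g (inord i) : nat).

Lemma cnt_le x i : cnt x i <= size x.
Proof. exact: count_size. Qed.

Lemma gtw_wf : well_founded (fun y x => gtw y x).
Proof.
have main : forall L x, size x < L -> Acc (fun y x => gtw y x) x.
  elim=> [//|L IH] x.
  rewrite ltnS leq_eqVlt => /orP[/eqP sx|]; last exact: IH.
  pose S (x : seq P) := [set g : {ffun 'I_(Nr P) -> 'I_L.+1} | lexgt (gf g) (cnt x)].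
  have inner : forall n x, size x = L -> #|S x| < n -> Acc (fun y x => gtw y x) x.
    elim=> [//|n IHn] {}x {}sx lt; constructor => y.
    rewrite /gtw sx => /orP[/IH//|/andP[/eqP sy ly]].
    apply: IHn => //; rewrite -ltnS; apply: leq_trans lt; rewrite ltnS.
    apply: proper_card; rewrite properE; apply/andP; split.
      by apply/subsetP => g; rewrite !inE => h; exact: lexgt_trans h ly.
    apply/subsetPn.
    have hb : forall i, cnt y i < L.+1 by move=> i; rewrite ltnS -sy cnt_le.
    exists [ffun i : 'I_(Nr P) => Ordinal (hb i)]; rewrite !inE.
    + rewrite (@lexgt_eq _ (cnt y) _ (cnt x)) // => i.
      by rewrite /gf ffunE /= inord_val.
    + rewrite (@lexgt_eq _ (cnt y) _ (cnt y)) ?lexgt_irr // => i;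
      by rewrite /gf ffunE /= inord_val.
  exact: (inner (#|S x|.+1)).
by move=> x; apply: (main (size x).+1).
Qed.

End Ord.

Lemma minpos (a : nat -> nat) m : exists n, m < n /\ forall n', m < n' -> a n <= a n'.
Proof.
suff H : forall v n, m < n -> a n <= v -> exists n0, m < n0 /\ forall n', m < n' -> a n0 <= a n'.
  exact: (H (a m.+1) m.+1 (ltnSn m) (leqnn _)).
elim=> [|v IH] n mn av.
  exists n; split => // n' _; move: av; rewrite leqn0 => /eqP->; exact: leq0n.
destruct (classic (forall n', m < n' -> a n <= a n')) as [h|h]; first by exists n.
apply: NNPP => nH; apply: h => n' mn'; apply: NNPP => h'.
have lt : a n' < a n by rewrite ltnNge; apply/negP.
apply: nH; apply: (IH n') => //; rewrite -ltnS; exact: leq_trans lt av.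
Qed.

Lemma mono_subseq (a : nat -> nat) : exists psi : nat -> nat,
  (forall n, psi n < psi n.+1) /\ (forall n, a (psi n) <= a (psi n.+1)).
Proof.
pose g m := proj1_sig (constructive_indefinite_description _ (minpos a m)).
have gP m : m < g m /\ forall n', m < n' -> a (g m) <= a n'.
  exact: (proj2_sig (constructive_indefinite_description _ (minpos a m))).
exists (fun n => iter n.+1 g 0); split => n.
  by rewrite iterS; case: (gP (iter n.+1 g 0)).
rewrite iterS; have -> : iter n.+2 g 0 = g (g (iter n g 0)) by [].
case: (gP (iter n g 0)) => lt1 H; apply: H.
case: (gP (g (iter n g 0))) => lt2 _.
exact: ltn_trans lt1 lt2.
Qed.

Lemma dickson_sub m (X : nat -> nat -> nat) : exists phi : nat -> nat,
  (forall n, phi n < phi n.+1) /\ forall n l, l < m -> X (phi n) l <= X (phi n.+1) l.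
Proof.
elim: m => [|m [phi [phiS phiX]]]; first by exists id.
have [psi [psiS psiX]] := mono_subseq (fun n => X (phi n) m).
have phiM : {homo phi : i j / i < j} := homo_ltn ltn_trans phiS.
exists (fun n => phi (psi n)); split => [n|n l]; first exact: phiM.
rewrite ltnS leq_eqVlt => /orP[/eqP->|lm]; first exact: psiX.
have hl : {homo (fun n => X (phi n) l) : i j / i <= j >-> i <= j}.
  by apply: homo_leq; [move=> x; exact: leqnn|exact: leq_trans|move=> i; exact: phiX].
by apply: hl; apply: ltnW.
Qed.

Lemma dickson m (X : nat -> nat -> nat) : exists i j, i < j /\ forall l, l < m -> X i l <= X j l.
Proof.
have [phi [phiS phiX]] := dickson_sub m X.
by exists (phi 0), (phi 1); split => // l lm; exact: phiX.
Qed.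

Section Noeth.
Variables (d : Order.disp_t) (P : finPOrderType d).

Lemma ex_comp (u v : seq P) : (forall p, count_mem p u <= count_mem p v) ->
  exists z, perm_eq (z ++ u) v.
Proof.
elim: v u => [|p v IH] u H.
  case: u H => [|q u] H; first by exists [::].
  by have := H q; rewrite /= eqxx.
case pu : (p \in u).
  have [z hz] : exists z, perm_eq (z ++ rem p u) v.
    apply: IH => q; rewrite count_mem_rem; have := H q; rewrite /=.
    set b := (p == q) : nat; lia.
  have h1 : perm_eq (z ++ u) (z ++ p :: rem p u) by rewrite perm_cat2l perm_to_rem.
  exists z; apply: perm_trans h1 _.
  have -> : z ++ p :: rem p u = z ++ [:: p] ++ rem p u by [].
  by rewrite perm_catCA /= perm_cons.
have [z hz] : exists z, perm_eq (z ++ u) v.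
  apply: IH => q; case: (eqVneq p q) => [<-|ne].
    by rewrite (count_memPn (negbT pu)).
  by have := H q; rewrite /= (negbTE ne).
by exists (p :: z); rewrite /= perm_cons.
Qed.

End Noeth.

Local Open Scope ring_scope.

Section Alg.
Variables (k : fieldType) (A : algType k) (d : Order.disp_t) (P : finPOrderType d) (f : P -> A).

Definition spanQ (Q : seq P -> Prop) (y : A) : Prop :=
  exists s : seq (k * seq P), (forall t, t \in s -> standard t.2 /\ Q t.2) /\
    y = \sum_(t <- s) t.1 *: monom f t.2.

Lemma span0 Q : spanQ Q 0.
Proof. by exists [::]; rewrite big_nil. Qed.

Lemma spanD Q x y : spanQ Q x -> spanQ Q y -> spanQ Q (x + y).
Proof.
move=> [s1 [H1 ->]] [s2 [H2 ->]]; exists (s1 ++ s2); split; last by rewrite big_cat.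
by move=> t; rewrite mem_cat => /orP[/H1|/H2].
Qed.

Lemma spanZ Q a x : spanQ Q x -> spanQ Q (a *: x).
Proof.
move=> [s [H ->]]; exists [seq (a * t.1, t.2) | t <- s]; split.
  by move=> t /mapP[t' /H h ->].
by rewrite big_map scaler_sumr; apply: eq_bigr => t _; rewrite scalerA.
Qed.

Lemma spanB Q x y : spanQ Q x -> spanQ Q y -> spanQ Q (x - y).
Proof. by move=> hx hy; rewrite -scaleN1r; apply: spanD => //; apply: spanZ. Qed.

Lemma span_mono (Q Q' : seq P -> Prop) x : (forall w, Q w -> Q' w) -> spanQ Q x -> spanQ Q' x.
Proof. by move=> HQ [s [H ->]]; exists s; split => // t /H[? /HQ]. Qed.

Lemma span1 (Q : seq P -> Prop) w : standard w -> Q w -> spanQ Q (monom f w).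
Proof. by move=> sw qw; exists [:: (1, w)]; rewrite big_seq1 scale1r; split => // t; rewrite inE => /eqP->. Qed.

Lemma span_sum (I : eqType) Q (s : seq I) (F : I -> A) :
  (forall i, i \in s -> spanQ Q (F i)) -> spanQ Q (\sum_(i <- s) F i).
Proof.
elim: s => [|i s IH] H; first by rewrite big_nil; exact: span0.
rewrite big_cons; apply: spanD; first by apply: H; rewrite mem_head.
by apply: IH => j hj; apply: H; rewrite inE hj orbT.
Qed.

Definition Sgt (x : seq P) := spanQ (fun w => gtw w x).

Lemma Sgt_perm x x' y : perm_eq x x' -> Sgt x y -> Sgt x' y.
Proof. by move=> pe; apply: span_mono => w; rewrite (gtw_perm (perm_refl w) pe). Qed.

Lemma Sgt_trans x x' y : gtw x' x -> Sgt x' y -> Sgt x y.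
Proof. by move=> g; apply: span_mono => w h; exact: gtw_trans h g. Qed.

Lemma monom_cons a w : monom f (a :: w) = f a * monom f w.
Proof. by rewrite /monom big_cons. Qed.

Lemma monom_cat w1 w2 : monom f (w1 ++ w2) = monom f w1 * monom f w2.
Proof. by rewrite /monom big_cat. Qed.

Lemma monom_nil : monom f [::] = 1.
Proof. by rewrite /monom big_nil. Qed.

Definition STRp (x : seq P) := exists c : k, (if chainb x then c != 0 else c == 0) /\
  Sgt x (monom f x - c *: monom f (sortr x)).

Lemma chainb_sub (x y : seq P) : {subset x <= y} -> chainb y -> chainb x.
Proof.
move=> sub /allP H; apply/allP => p px; apply/allP => q qx.
by move: (H p (sub p px)) => /allP /(_ q (sub q qx)).
Qed.

Lemma chainb_perm (x y : seq P) : perm_eq x y -> chainb x = chainb y.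
Proof. by move=> pe; rewrite -!std_chain (sortr_perm pe). Qed.

Lemma str_span x z : STRp z -> gtw z x -> Sgt x (monom f z).
Proof.
move=> [c [hc R]] g.
have -> : monom f z = (monom f z - c *: monom f (sortr z)) + c *: monom f (sortr z).
  by rewrite subrK.
apply: spanD; first exact: Sgt_trans g R.
move: hc; case hz : (chainb z) => hc.
  apply: spanZ; apply: span1; first by rewrite std_chain.
  by rewrite (gtw_perm (perm_sortr z) (perm_refl x)).
by rewrite (eqP hc) scale0r; exact: span0.
Qed.

Lemma Sgt_mull w x R : (forall z, gtw z (w ++ x) -> STRp z) -> Sgt x R ->
  Sgt (w ++ x) (monom f w * R).
Proof.
move=> IH [s [H ->]]; rewrite mulr_sumr; apply: span_sum => t ht.
rewrite -scalerAr -monom_cat; apply: spanZ.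
have g : gtw (w ++ t.2) (w ++ x).
  by apply: gtw_catl; case: (H t).
exact: str_span (IH _ g) g.
Qed.

Lemma Sgt_mulr w x R : (forall z, gtw z (x ++ w) -> STRp z) -> Sgt x R ->
  Sgt (x ++ w) (R * monom f w).
Proof.
move=> IH [s [H ->]]; rewrite mulr_suml; apply: span_sum => t ht.
rewrite -scalerAl -monom_cat; apply: spanZ.
have g : gtw (t.2 ++ w) (x ++ w).
  by apply: gtw_catr; case: (H t).
exact: str_span (IH _ g) g.
Qed.

Definition tw (t : P * option P) : seq P :=
  t.1 :: (if t.2 is Some mu then [:: mu] else [::]).

Lemma term_val_monom t : term_val f t = monom f (tw t).
Proof.
case: t => l [mu|]; rewrite /term_val /tw /= !monom_cons monom_nil //.
by rewrite mulr1.
Qed.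

Lemma gtw_low (a b : P) (t : P * option P) :
  [/\ (t.1 < a)%O, (t.1 < b)%O & (if t.2 is Some mu then (t.1 <= mu)%O else true)] ->
  gtw (tw t) [:: a; b].
Proof.
case: t => l [mu|] /= [la lb]; last by move=> _; apply: gtw_shorter.
move=> lmu; rewrite /gtw /=. apply/lexgtP.
have ra := rk_lt la; have rb := rk_lt lb; have rm := rk_le lmu.
exists (Ordinal (rk_bound l)); split => [j /= jl|] /=; rewrite /cnt /=.
  have e1 : (rk l == j) = false by apply/negbTE; rewrite neq_ltn jl orbT.
  have e2 : (rk mu == j) = false.
    by apply/negbTE; rewrite neq_ltn (leq_trans jl rm) orbT.
  have e3 : (rk a == j) = false.
    by apply/negbTE; rewrite neq_ltn (ltn_trans jl ra) orbT.
  have e4 : (rk b == j) = false.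
    by apply/negbTE; rewrite neq_ltn (ltn_trans jl rb) orbT.
  by rewrite e1 e2 e3 e4.
have e3 : (rk a == rk l) = false by apply/negbTE; rewrite neq_ltn ra orbT.
have e4 : (rk b == rk l) = false by apply/negbTE; rewrite neq_ltn rb orbT.
by rewrite e3 e4 eqxx.
Qed.

Lemma lower_mul (a b : P) u L : lower_comb f a b L ->
  (forall z, gtw z (a :: b :: u) -> STRp z) -> Sgt (a :: b :: u) (L * monom f u).
Proof.
move=> [s [H ->]] IH; rewrite mulr_suml; apply: span_sum => t ht.
rewrite -scalerAl term_val_monom -monom_cat; apply: spanZ.
have g : gtw (tw t.2 ++ u) (a :: b :: u).
  by apply: (@gtw_catr _ _ u _ [:: a; b]); exact: gtw_low (H t ht).
exact: str_span (IH _ g) g.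
Qed.

End Alg.

Section Str.
Variables (k : fieldType) (A : algType k) (d : Order.disp_t) (P : finPOrderType d) (f : P -> A).
Hypothesis H4 : forall a b : P, ~~ (a >=< b)%O -> lower_comb f a b (f a * f b).
Hypothesis H5 : forall a b : P, exists c : k, c != 0 /\
          lower_comb f a b (f a * f b - c *: (f b * f a)).

Lemma monom1 (b : P) : monom f [:: b] = f b.
Proof. by rewrite monom_cons monom_nil mulr1. Qed.

Lemma INS (a : P) (u : seq P) : standard u -> (forall z, gtw z (a :: u) -> STRp f z) ->
  exists c, (if chainb (a :: u) then c != 0 else c == 0) /\
    Sgt f (a :: u) (f a * monom f u - c *: monom f (sortr (a :: u))).
Proof.
case: u => [|b u'] su IH.
  exists 1; rewrite /chainb /= comparablexx /= oner_eq0; split => //.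
  rewrite sortr_std // monom1 monom_nil mulr1 scale1r subrr; exact: span0.
have su' : standard u' := path_sorted su.
have bmin : all (fun q => b <= q)%O u' := order_path_min le_trans su.
case ab : (a <= b)%O.
  have sau : standard (a :: b :: u') by rewrite /standard /= ab.
  exists 1; rewrite -std_chain sortr_std // sau oner_eq0; split => //.
  by rewrite -monom_cons scale1r subrr; exact: span0.
case ba : (b <= a)%O; last first.
  have nc : ~~ (a >=< b)%O by rewrite /Order.comparable ab ba.
  have L0 := H4 nc.
  exists 0; split.
    case ch : (chainb _) => //.
    by move/allP: ch => /(_ a (mem_head _ _))/allP/(_ b); rewrite !inE eqxx orbT (negbTE nc) => /(_ isT).
  rewrite scale0r subr0 monom_cons mulrA; exact: lower_mul L0 IH.
have blta : (b < a)%O.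
  by rewrite lt_def ba andbT; apply/eqP => e; rewrite e lexx in ab.
have [c0 [c0n L0]] := H5 a b.
set L := f a * f b - c0 *: (f b * f a) in L0.
have e1 : f a * monom f (b :: u') = c0 *: (f b * monom f (a :: u')) + L * monom f u'.
  rewrite /L mulrBl -scalerAl !monom_cons !mulrA.
  by rewrite addrC subrK.
have gau : gtw (a :: u') (a :: b :: u') by apply: gtw_shorter => /=.
have [c1 [hc1 R1]] := IH _ gau.
have Lpart : Sgt f (a :: b :: u') (L * monom f u') := lower_mul L0 IH.
have perm_ab : perm_eq (b :: a :: u') (a :: b :: u').
  by apply/permP => q /=; rewrite addnCA.
have R1b : Sgt f (a :: b :: u') (f b * (monom f (a :: u') - c1 *: monom f (sortr (a :: u')))).
  apply: (Sgt_perm perm_ab); rewrite -monom1.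
  apply: (@Sgt_mull _ _ _ _ _ [:: b] (a :: u')) => // z g.
  by apply: IH; rewrite -(gtw_perm (perm_refl z) perm_ab).
case ch : (chainb (a :: u')).
  exists (c0 * c1).
  have ab' : all (leR b) (a :: u').
    rewrite /= /leR (rk_le (ltW blta)) /=.
    by apply/allP => q /(allP bmin) /rk_le.
  have srt : sortr (a :: b :: u') = b :: sortr (a :: u').
    by rewrite -(sortr_perm perm_ab) sortr_cons.
  have chx : chainb (a :: b :: u').
    rewrite -std_chain srt /standard /= path_min_sorted; first by rewrite -/(standard _) std_chain.
    apply/allP => q; rewrite (perm_mem (perm_sortr _)) inE => /orP[/eqP->|/(allP bmin)//].
    exact: ltW.
  rewrite chx mulf_neq0 //=; last by rewrite ch in hc1.
  split => //.
  have -> : f a * monom f (b :: u') - (c0 * c1) *: monom f (sortr (a :: b :: u')) =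
     c0 *: (f b * (monom f (a :: u') - c1 *: monom f (sortr (a :: u')))) + L * monom f u'.
    rewrite e1 srt (monom_cons f b (sortr _)) mulrBr scalerBr -scalerAr scalerA.
    by rewrite addrAC.
  by apply: spanD => //; exact: spanZ.
exists 0.
have chx : chainb (a :: b :: u') = false.
  apply/negbTE/negP => H; suff : chainb (a :: u') by rewrite ch.
  apply: (chainb_sub _ H) => q; rewrite !inE.
  by case/orP=> ->; rewrite ?orbT.
rewrite chx eqxx; split => //.
rewrite ch in hc1; rewrite (eqP hc1) scale0r subr0 in R1b.
rewrite scale0r subr0 e1; apply: spanD => //; exact: spanZ.
Qed.

Lemma STR (x : seq P) : STRp f x.
Proof.
elim/(well_founded_ind (@gtw_wf d P)): x => x IH.
case: x IH => [|a y] IH.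
  exists 1; rewrite /chainb /= oner_eq0; split => //.
  rewrite sortr_std // scale1r subrr; exact: span0.
have [cy [hcy Ry]] := IH y (@gtw_shorter _ _ y (a :: y) (ltnSn _)).
have FR : Sgt f (a :: y) (f a * (monom f y - cy *: monom f (sortr y))).
  by have := @Sgt_mull _ _ _ _ f [:: a] y _ IH Ry; rewrite monom1.
have decomp : monom f (a :: y) = cy *: (f a * monom f (sortr y)) +
    f a * (monom f y - cy *: monom f (sortr y)).
  by rewrite monom_cons mulrBr -scalerAr addrC subrK.
case chy : (chainb y); last first.
  exists 0; rewrite chy in hcy.
  have -> : chainb (a :: y) = false.
    apply/negbTE/negP => H; suff : chainb y by rewrite chy.
    by apply: (chainb_sub _ H) => q; rewrite inE => ->; rewrite orbT.
  split => //; rewrite scale0r subr0 decomp (eqP hcy) scale0r add0r.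
  by rewrite (eqP hcy) in FR.
have su : standard (sortr y) by rewrite std_chain.
have pe : perm_eq (a :: sortr y) (a :: y) by rewrite perm_cons perm_sortr.
have [c' [hc' R']] : exists c, (if chainb (a :: sortr y) then c != 0 else c == 0) /\
    Sgt f (a :: sortr y) (f a * monom f (sortr y) - c *: monom f (sortr (a :: sortr y))).
  apply: INS => // z g; apply: IH.
  by rewrite -(gtw_perm (perm_refl z) pe).
exists (cy * c'); split.
  rewrite -(chainb_perm pe); rewrite chy in hcy.
  by case: (chainb _) hc' => hc'; rewrite ?mulf_neq0 // (eqP hc') mulr0.
rewrite (sortr_perm pe) in R'.
have -> : monom f (a :: y) - (cy * c') *: monom f (sortr (a :: y)) =
   cy *: (f a * monom f (sortr y) - c' *: monom f (sortr (a :: y))) +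
   f a * (monom f y - cy *: monom f (sortr y)).
  by rewrite {1}decomp scalerBr scalerA addrAC.
apply: spanD => //; apply: spanZ; exact: Sgt_perm pe R'.
Qed.

End Str.

Section Lead.
Variables (k : fieldType) (A : algType k) (d : Order.disp_t) (P : finPOrderType d) (f : P -> A).

Definition Lead (x : A) (u : seq P) (c : k) :=
  [/\ standard u, c != 0 & Sgt f u (x - c *: monom f u)].

Lemma normalize (Q : seq P -> Prop) (s : seq (k * seq P)) :
  (forall t, t \in s -> standard t.2 /\ Q t.2) ->
  exists W : seq (seq P), exists C : seq P -> k,
    [/\ uniq W, (forall w, w \in W -> standard w /\ Q w) &
     \sum_(t <- s) t.1 *: monom f t.2 = \sum_(w <- W) C w *: monom f w].
Proof.
elim: s => [|t s IH] H.
  by exists [::], (fun _ => 0); split => //; rewrite !big_nil.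
have [|W [C [uW HW E]]] := IH.
  by move=> t' ht'; apply: H; rewrite inE ht' orbT.
have [st qt] := H t (mem_head _ _).
rewrite big_cons E.
case tW : (t.2 \in W).
  exists W, (fun w => if w == t.2 then C w + t.1 else C w); split => //.
  rewrite (bigD1_seq t.2) //= (bigD1_seq t.2 tW uW) /= eqxx addrA scalerDl.
  congr (_ + _); first by rewrite addrC.
  by apply: eq_bigr => w /negbTE ->.
exists (t.2 :: W), (fun w => if w == t.2 then t.1 else C w); split.
- by rewrite /= tW.
- by move=> w; rewrite inE => /orP[/eqP->|/HW].
- rewrite big_cons eqxx; congr (_ + _).
  rewrite big_seq_cond [RHS]big_seq_cond; apply: eq_bigr => w /andP[wW _].
  by have -> : (w == t.2) = false by apply/negbTE; apply: contraFneq tW => <-.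
Qed.

Lemma min_elt (W : seq (seq P)) : W != [::] -> (forall w, w \in W -> standard w) -> uniq W ->
  exists w0, w0 \in W /\ forall w, w \in W -> w != w0 -> gtw w w0.
Proof.
elim: W => [//|w W IH] _ sW /= /andP[wW uW].
case: (eqVneq W [::]) => [->|neW].
  by exists w; split; [rewrite mem_head|move=> w'; rewrite inE => /eqP->; rewrite eqxx].
have [|w0 [w0W H]] := IH neW _ uW.
  by move=> w' h; apply: sW; rewrite inE h orbT.
have nw : w != w0 by apply: contraNneq wW => ->.
have := gtw_tot (sW w (mem_head _ _)) (sW w0 _) nw.
rewrite inE w0W orbT => /(_ isT) /orP[g|g].
  exists w0; split; first by rewrite inE w0W orbT.
  by move=> w'; rewrite inE => /orP[/eqP->//|/H].
exists w; split; first exact: mem_head.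
move=> w'; rewrite inE => /orP[/eqP->|w'W]; first by rewrite eqxx.
move=> _; case: (eqVneq w' w0) => [->//|ne].
exact: gtw_trans (H w' w'W ne) g.
Qed.

Lemma lead_exists (Q : seq P -> Prop) x : spanQ f Q x ->
  x = 0 \/ exists u c, Q u /\ Lead x u c.
Proof.
move=> [s [Hs ->]].
have [W [C [uW HW ->]]] := normalize Hs.
have -> : \sum_(w <- W) C w *: monom f w = \sum_(w <- [seq w <- W | C w != 0]) C w *: monom f w.
  rewrite big_filter [RHS]big_mkcond; apply: eq_bigr => w _.
  by case: (eqVneq (C w) 0) => [->|]; rewrite ?scale0r.
set W1 := [seq w <- W | C w != 0].
case: (eqVneq W1 [::]) => [->|ne]; first by left; rewrite big_nil.
right.
have sW1 : forall w, w \in W1 -> standard w by move=> w; rewrite mem_filter => /andP[_ /HW[]].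
have [w0 [w0W H]] := min_elt ne sW1 (filter_uniq _ uW).
exists w0, (C w0); split.
  by move: w0W; rewrite mem_filter => /andP[_ /HW[]].
split; first exact: sW1.
  by move: w0W; rewrite mem_filter => /andP[].
rewrite (bigD1_seq w0) //= ?filter_uniq // addrC addrK.
rewrite -big_filter; apply: span_sum => w; rewrite mem_filter => /andP[nw ww].
by apply: spanZ; apply: span1; [exact: sW1|exact: H].
Qed.

End Lead.

Section NoethAlg.
Variables (k : fieldType) (A : algType k) (d : Order.disp_t) (P : finPOrderType d) (f : P -> A).
Hypothesis H2 : forall x : A, exists s : seq (k * seq P), x = \sum_(t <- s) t.1 *: monom f t.2.
Hypothesis H4 : forall a b : P, ~~ (a >=< b)%O -> lower_comb f a b (f a * f b).
Hypothesis H5 : forall a b : P, exists c : k, c != 0 /\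
          lower_comb f a b (f a * f b - c *: (f b * f a)).

Lemma monom_span (w : seq P) : spanQ f (fun _ => True) (monom f w).
Proof.
have [c [hc R]] := STR H4 H5 w.
have -> : monom f w = (monom f w - c *: monom f (sortr w)) + c *: monom f (sortr w) by rewrite subrK.
apply: spanD; first exact: span_mono R.
move: hc; case ch : (chainb w) => hc.
  by apply: spanZ; apply: span1 => //; rewrite std_chain.
by rewrite (eqP hc) scale0r; exact: span0.
Qed.

Lemma span_all x : spanQ f (fun _ => True) x.
Proof.
have [s ->] := H2 x; apply: span_sum => t _; apply: spanZ; exact: monom_span.
Qed.

Lemma Lead_std x u c : Lead f x u c -> standard u.
Proof. by case. Qed.

Lemma Hup_left x u c (v : seq P) : Lead f x u c -> standard v ->
  (forall p, count_mem p u <= count_mem p v)%N ->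
  exists z c', Lead f (monom f z * x) v c'.
Proof.
move=> [su cn Rx] sv H.
have [z pz] := ex_comp H.
have [c' [hc' R']] := STR H4 H5 (z ++ u).
have chz : chainb (z ++ u) by rewrite -std_chain (sortr_perm pz) sortr_std.
rewrite chz in hc'; rewrite (sortr_perm pz) (sortr_std sv) in R'.
exists z, (c * c'); split => //; first by rewrite mulf_neq0.
have -> : monom f z * x - (c * c') *: monom f v =
    c *: (monom f (z ++ u) - c' *: monom f v) + monom f z * (x - c *: monom f u).
  rewrite monom_cat mulrBr scalerBr scalerA -scalerAr [RHS]addrC addrA subrK.
  by [].
apply: (Sgt_perm pz); apply: spanD; first exact: spanZ.
by apply: Sgt_mull => // z' _; exact: STR.
Qed.

Lemma Hup_right x u c (v : seq P) : Lead f x u c -> standard v ->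
  (forall p, count_mem p u <= count_mem p v)%N ->
  exists z c', Lead f (x * monom f z) v c'.
Proof.
move=> [su cn Rx] sv H.
have [z pz0] := ex_comp H.
have pz : perm_eq (u ++ z) v by rewrite perm_catC.
have [c' [hc' R']] := STR H4 H5 (u ++ z).
have chz : chainb (u ++ z) by rewrite -std_chain (sortr_perm pz) sortr_std.
rewrite chz in hc'; rewrite (sortr_perm pz) (sortr_std sv) in R'.
exists z, (c * c'); split => //; first by rewrite mulf_neq0.
have -> : x * monom f z - (c * c') *: monom f v =
    c *: (monom f (u ++ z) - c' *: monom f v) + (x - c *: monom f u) * monom f z.
  rewrite monom_cat mulrBl scalerBr scalerA -scalerAl [RHS]addrC addrA subrK.
  by [].
apply: (Sgt_perm pz); apply: spanD; first exact: spanZ.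
by apply: Sgt_mulr => // z' _; exact: STR.
Qed.

End NoethAlg.

Section AccGen.
Variables (k : fieldType) (A : algType k) (d : Order.disp_t) (P : finPOrderType d) (f : P -> A).
Hypothesis Hsp : forall x : A, spanQ f (fun _ => True) x.
Variable I : nat -> A -> Prop.
Hypothesis I0 : forall n, I n 0.
Hypothesis ID : forall n x y, I n x -> I n y -> I n (x + y).
Hypothesis IZ : forall n a x, I n x -> I n (a *: x).
Hypothesis Iup : forall n x u c (v : seq P), I n x -> Lead f x u c -> standard v ->
  (forall p, count_mem p u <= count_mem p v)%N -> exists y c', I n y /\ Lead f y v c'.
Hypothesis Ichain : forall n x, I n x -> I n.+1 x.

Definition LE n (u : seq P) := exists x c, I n x /\ Lead f x u c.

Lemma Imono n m : (n <= m)%N -> forall x, I n x -> I m x.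
Proof.
move=> nm x Ix; rewrite -(subnKC nm); elim: (m - n)%N => [|j IH]; first by rewrite addn0.
by rewrite addnS; apply: Ichain.
Qed.

Lemma LEmono n m u : (n <= m)%N -> LE n u -> LE m u.
Proof. by move=> nm [x [c [Ix L]]]; exists x, c; split => //; exact: Imono Ix. Qed.

Lemma claim2 n N : (forall x, I N x -> I n x) -> (forall u, LE n u -> LE N u) ->
  forall x, I n x -> I N x.
Proof.
move=> sub le x Ix.
case: (lead_exists (Hsp x)) => [->|[u [c [_ L]]]]; first exact: I0.
elim/(well_founded_ind (@gtw_wf d P)): u x c Ix L => u IHu x c Ix [su cn Rx].
have [y [c' [Iy [_ c'n Ry]]]] := le u (ex_intro _ x (ex_intro _ c (conj Ix (And3 su cn Rx)))).
set z := x - (c / c') *: y.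
have Iz : I n z by apply: ID => //; rewrite -scaleN1r; apply: IZ; apply: IZ; exact: sub.
have Sz : Sgt f u z.
  have -> : z = (x - c *: monom f u) - (c / c') *: (y - c' *: monom f u).
    by rewrite /z scalerBr scalerA divfK // opprB addrA subrK.
  by apply: spanB => //; exact: spanZ.
have -> : x = z + (c / c') *: y by rewrite /z subrK.
apply: ID; last exact: IZ.
case: (lead_exists Sz) => [->|[u'' [c'' [g L'']]]]; first exact: I0.
exact: IHu g z c'' Iz L''.
Qed.

Lemma claim1 : exists N, forall n, (N <= n)%N -> forall u, LE n u -> LE N u.
Proof.
apply: NNPP => nH.
have H : forall N, exists p : nat * seq P, [/\ (N <= p.1)%N, LE p.1 p.2 & ~ LE N p.2].
  move=> N; apply: NNPP => hN; apply: nH; exists N => n Nn u Lu.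
  apply: NNPP => nLu; apply: hN; by exists (n, u).
pose F N := proj1_sig (constructive_indefinite_description _ (H N)).
have FP N : [/\ (N <= (F N).1)%N, LE (F N).1 (F N).2 & ~ LE N (F N).2].
  exact: (proj2_sig (constructive_indefinite_description _ (H N))).
pose sN i := iter i (fun N => (F N).1) 0%N.
pose us i := (F (sN i)).2.
have sNS i : sN i.+1 = (F (sN i)).1 by [].
have sNmono : {homo sN : i j / (i <= j)%N >-> (i <= j)%N}.
  apply: homo_leq; [move=> x; exact: leqnn|exact: leq_trans|move=> i].
  by rewrite sNS; case: (FP (sN i)).
have LEus i : LE (sN i.+1) (us i) by rewrite sNS; case: (FP (sN i)).
have nLEus i : ~ LE (sN i) (us i) by case: (FP (sN i)).
have [i [j [ij Hij]]] := dickson (Nr P) (fun i l => cnt (us i) l).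
have cle : forall p, (count_mem p (us i) <= count_mem p (us j))%N.
  by move=> p; rewrite -!cnt_mem; apply: Hij; exact: rk_bound.
have [x [c [Ix L]]] := LEus i.
have sj : standard (us j).
  by have [x' [c' [_ []]]] := LEus j.
have [y [c' [Iy L']]] := Iup Ix L sj cle.
apply: (nLEus j); apply: (LEmono (sNmono _ _ ij)).
by exists y, c'.
Qed.

Lemma acc_gen : exists N, forall n, (N <= n)%N -> forall x, I n x -> I N x.
Proof.
have [N HN] := claim1.
exists N => n Nn; apply: claim2; first exact: Imono.
exact: HN.
Qed.

End AccGen.

Section LinAlg.
Variables (k : fieldType) (A : algType k).

Definition inspan (t : seq A) (x : A) :=
  exists a : nat -> k, x = \sum_(j < size t) a j *: t`_j.

Lemma inspan0 t : inspan t 0.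
Proof. by exists (fun _ => 0); rewrite big1 // => j _; rewrite scale0r. Qed.

Lemma inspanD t x y : inspan t x -> inspan t y -> inspan t (x + y).
Proof.
move=> [a ->] [b ->]; exists (fun j => a j + b j).
by rewrite -big_split; apply: eq_bigr => j _; rewrite scalerDl.
Qed.

Lemma inspanZ t c x : inspan t x -> inspan t (c *: x).
Proof.
move=> [a ->]; exists (fun j => c * a j).
by rewrite scaler_sumr; apply: eq_bigr => j _; rewrite scalerA.
Qed.

Lemma inspan_mem t x : x \in t -> inspan t x.
Proof.
move=> xt; exists (fun j => if j == index x t then 1 else 0).
have it : (index x t < size t)%N by rewrite index_mem.
rewrite (bigD1 (Ordinal it)) //= eqxx scale1r nth_index // big1 ?addr0 // => j ne.
rewrite ifF ?scale0r //; apply: contraNF ne => /eqP e.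
by apply/eqP/val_inj.
Qed.

Lemma inspan_sum (I : eqType) t (r : seq I) (F : I -> A) :
  (forall i, i \in r -> inspan t (F i)) -> inspan t (\sum_(i <- r) F i).
Proof.
elim: r => [|i r IH] H; first by rewrite big_nil; exact: inspan0.
rewrite big_cons; apply: inspanD; first by apply: H; rewrite mem_head.
by apply: IH => j hj; apply: H; rewrite inE hj orbT.
Qed.

Lemma dim_bound (s t : seq A) : lin_indep s -> (forall x, x \in s -> inspan t x) ->
  (size s <= size t)%N.
Proof.
move=> li H; rewrite leqNgt; apply/negP => lt.
have Hc : forall i : 'I_(size s), exists a : nat -> k, s`_i = \sum_(j < size t) a j *: t`_j.
  by move=> i; apply: H; rewrite mem_nth.
pose a i := proj1_sig (constructive_indefinite_description _ (Hc i)).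
have aP (i : 'I_(size s)) : s`_i = \sum_(j < size t) a i j *: t`_j.
  exact: (proj2_sig (constructive_indefinite_description _ (Hc i))).
pose M : 'M[k]_(size s, size t) := \matrix_(i < size s, j < size t) a i j.
have rk : (\rank (kermx M) != 0)%N.
  rewrite mxrank_ker subn_eq0 -ltnNge.
  exact: leq_ltn_trans (rank_leq_col M) lt.
have [i0 ni0] : exists i0, row i0 (kermx M) != 0.
  apply: NNPP => nH; move: rk; rewrite mxrank_eq0 => /negP; apply.
  apply/eqP/row_matrixP => i; rewrite row0.
  by apply: NNPP => ne; apply: nH; exists i; apply/eqP.
set v := row i0 (kermx M) in ni0.
have vM : v *m M = 0 by rewrite /v -row_mul mulmx_ker row0.
pose c (l : nat) := if insub l is Some i then v 0 i else 0.
have cE (i : 'I_(size s)) : c i = v 0 i by rewrite /c valK.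
have sum0 : \sum_(i < size s) c i *: s`_i = 0.
  transitivity (\sum_(j < size t) (v *m M) 0 j *: t`_j); last first.
    by rewrite vM big1 // => j _; rewrite mxE scale0r.
  under eq_bigr => i _ do rewrite cE aP scaler_sumr.
  rewrite exchange_big /=; apply: eq_bigr => j _.
  rewrite !mxE scaler_suml; apply: eq_bigr => ii _.
  have ->: M ii j = a ii j by rewrite /M !mxE.
  by rewrite scalerA.
case/negP: ni0; apply/eqP/rowP => i; rewrite [RHS]mxE -cE.
by apply: (li c sum0); exact: ltn_ord.
Qed.

End LinAlg.

Section PG.
Variables (k : fieldType) (A : algType k) (G : nat -> A -> Prop) (d : Order.disp_t)
  (P : finPOrderType d) (f : P -> A) (deg : P -> nat).
Hypothesis G0 : forall n, G n 0.
Hypothesis GD : forall n x y, G n x -> G n y -> G n (x + y).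
Hypothesis GZ : forall n (a : k) x, G n x -> G n (a *: x).
Hypothesis G1 : G 0%N 1.
Hypothesis GM : forall m n x y, G m x -> G n y -> G (m + n)%N (x * y).
Hypothesis Guniq : forall (N : nat) (c : nat -> A), (forall i, G i (c i)) ->
          \sum_(i < N) c i = 0 -> forall i, (i < N)%N -> c i = 0.
Hypothesis Hdeg : forall p, (0 < deg p)%N /\ G (deg p) (f p).
Hypothesis Hsp : forall x : A, spanQ f (fun _ => True) x.

Definition degw (w : seq P) : nat := (\sum_(p <- w) deg p)%N.

Lemma monom_G w : G (degw w) (monom f w).
Proof.
elim: w => [|a w IH]; first by rewrite /degw big_nil monom_nil.
rewrite /degw big_cons monom_cons; apply: GM => //; exact: (Hdeg a).2.
Qed.

Lemma size_degw w : (size w <= degw w)%N.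
Proof.
elim: w => [|a w IH]; first by rewrite /degw big_nil.
rewrite /degw big_cons /= -/(degw w); have := (Hdeg a).1; lia.
Qed.

Lemma G_sum n (I : eqType) (r : seq I) (F : I -> A) :
  (forall i, i \in r -> G n (F i)) -> G n (\sum_(i <- r) F i).
Proof.
elim: r => [|i r IH] H; first by rewrite big_nil.
rewrite big_cons; apply: GD; first by apply: H; rewrite mem_head.
by apply: IH => j hj; apply: H; rewrite inE hj orbT.
Qed.

Lemma sum_ind (D m : nat) (y : A) : (m < D)%N -> \sum_(i < D) (if m == i then y else 0) = y.
Proof.
move=> mD; rewrite (bigD1 (Ordinal mD)) //= eqxx big1 ?addr0 // => i ne.
rewrite ifF //; apply: contraNF ne => /eqP e; apply/eqP/val_inj => /=.
by rewrite e.
Qed.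

Lemma le_sum_mem (I : eqType) (r : seq I) (F : I -> nat) i : i \in r -> (F i <= \sum_(j <- r) F j)%N.
Proof.
elim: r => [//|j r IH]; rewrite inE big_cons => /orP[/eqP->|/IH h]; first exact: leq_addr.
exact: leq_trans h (leq_addl _ _).
Qed.

Lemma proj_deg n x : G n x -> exists s : seq (k * seq P),
  (forall t, t \in s -> standard t.2 /\ degw t.2 = n) /\ x = \sum_(t <- s) t.1 *: monom f t.2.
Proof.
move=> Gx; have [s0 [Hs0 Ex]] := Hsp x.
pose D := (n + \sum_(t <- s0) degw t.2).+1.
have nD : (n < D)%N by rewrite ltnS leq_addr.
have tD : forall t, t \in s0 -> (degw t.2 < D)%N.
  move=> t ts; rewrite ltnS; apply: leq_trans (leq_addl _ _).
  exact: (le_sum_mem (fun t => degw t.2)).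
pose c i := \sum_(t <- s0 | degw t.2 == i) t.1 *: monom f t.2 - (if n == i then x else 0).
have Gc : forall i, G i (c i).
  move=> i; rewrite /c; apply: GD; last first.
    rewrite -scaleN1r; apply: GZ; case: eqP => [<-//|_]; exact: G0.
  rewrite -big_filter; apply: G_sum => t; rewrite mem_filter => /andP[/eqP <- _].
  by apply: GZ; exact: monom_G.
have sc : \sum_(i < D) c i = 0.
  rewrite /c big_split /= sumrN sum_ind //.
  have -> : \sum_(i < D) \sum_(t <- s0 | degw t.2 == i) t.1 *: monom f t.2 = x.
    under eq_bigr => i _ do rewrite big_mkcond.
    rewrite exchange_big /= Ex big_seq [RHS]big_seq; apply: eq_bigr => t ts.
    by rewrite sum_ind // tD.
  by rewrite subrr.
have := Guniq Gc sc nD; rewrite /c eqxx => /eqP; rewrite subr_eq0 => /eqP Ex'.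
exists [seq t <- s0 | degw t.2 == n]; split.
  by move=> t; rewrite mem_filter => /andP[/eqP e /Hs0[]].
by rewrite big_filter.
Qed.

Definition wordof n (g : {ffun P -> 'I_n.+1}) : seq P :=
  flatten [seq nseq (g p : nat) p | p <- enum P].

Lemma count_wordof n (g : {ffun P -> 'I_n.+1}) q : count_mem q (wordof g) = g q.
Proof.
rewrite /wordof count_flatten -map_comp sumnE big_map big_enum /=.
rewrite (bigD1 q) //= count_nseq /= eqxx mul1n big1 ?addn0 // => p pq.
by rewrite count_nseq /= (negbTE pq).
Qed.

Definition tlist n := [seq monom f (sortr (wordof g)) | g <- enum {ffun P -> 'I_n.+1}].

Lemma size_tlist n : size (tlist n) = (n.+1 ^ #|P|)%N.
Proof. by rewrite size_map -cardT card_ffun card_ord. Qed.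

Lemma std_in_tlist n w : standard w -> (size w <= n)%N -> monom f w \in tlist n.
Proof.
move=> sw wn.
have hb : forall p, (count_mem p w < n.+1)%N.
  by move=> p; rewrite ltnS; apply: leq_trans (count_size _ _) wn.
pose g : {ffun P -> 'I_n.+1} := [ffun p => Ordinal (hb p)].
have pe : perm_eq (wordof g) w.
  by rewrite /perm_eq; apply/allP => p _; rewrite /= count_wordof ffunE.
have -> : w = sortr (wordof g) by rewrite (sortr_perm pe) sortr_std.
by apply: map_f; rewrite mem_enum.
Qed.

Lemma PG : poly_growth G.
Proof.
exists (2 ^ #|P|)%N%:R, #|P|; split; first by rewrite ltr0n expn_gt0.
move=> n n1 s Hs li.
have b1 : (size s <= size (tlist n))%N.
  apply: (dim_bound li) => x xs. have [s' [Hs' ->]] := proj_deg (Hs x xs).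
  apply: inspan_sum => t ts; apply: inspanZ; apply: inspan_mem.
  have [st dt] := Hs' t ts.
  by apply: std_in_tlist => //; rewrite -dt size_degw.
rewrite size_tlist in b1.
have b2 : (n.+1 ^ #|P| <= 2 ^ #|P| * n ^ #|P|)%N.
  rewrite -expnMn; case: (posnP #|P|) => [->//|pos].
  by rewrite leq_exp2r //; lia.
by rewrite -natrX -natrM ler_nat (leq_trans b1 b2).
Qed.

End PG.

Theorem lemma1p2p2 (k : fieldType) (A : algType k) (G : nat -> A -> Prop)
  (d : Order.disp_t) (P : finPOrderType d) (f : P -> A) (deg : P -> nat) :
  quantum_graded_ASL G f deg -> noetherian A /\ poly_growth G.
Proof.
move=> [Hgr [finj [Hdeg [H2 [H3 [H4 H5]]]]]].
have [G0 [GD [GZ [G1 [GM [Gdec Guniq]]]]]] := Hgr.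
have Hsp := span_all H2 H4 H5.
split; last exact: (PG G0 GD GZ G1 GM Guniq Hdeg Hsp).
split.
- move=> I HI Hch; apply: (acc_gen Hsp (I := I)) => //.
  + by move=> n; case: (HI n).
  + by move=> n x y; case: (HI n) => _ h _; exact: h.
  + move=> n a x Ix; have -> : a *: x = (a *: 1) * x by rewrite -scalerAl mul1r.
    by case: (HI n) => _ _ h; exact: h.
  + move=> n x u c v Ix L sv cle.
    have [z [c' L']] := Hup_left H4 H5 L sv cle.
    exists (monom f z * x), c'; split => //.
    by case: (HI n) => _ _ h; exact: h.
- move=> I HI Hch; apply: (acc_gen Hsp (I := I)) => //.
  + by move=> n; case: (HI n).
  + by move=> n x y; case: (HI n) => _ h _; exact: h.
  + move=> n a x Ix; have -> : a *: x = x * (a *: 1) by rewrite -scalerAr mulr1.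
    by case: (HI n) => _ _ h; exact: h.
  + move=> n x u c v Ix L sv cle.
    have [z [c' L']] := Hup_right H4 H5 L sv cle.
    exists (x * monom f z), c'; split => //.
    by case: (HI n) => _ _ h; exact: h.
Qed.
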